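(* Let $\Gamma$ be a finite graph with vertices $v_1,\dots,v_n$ ($n\ge2$) and edges $e_1,\dots,e_m$ with edge dimensions $\vec e=(e_1,\dots,e_m)$, and let $V_1,\dots,V_n$ be complex vector spaces, $\dim V_j=\mathbf v_j$. Suppose $v_1$ has valence one and is joined by the edge $e_1$ to $v_2$, and suppose $\mathbf v_1\le e_1$. Let $\tilde\Gamma$ be the graph obtained from $\Gamma$ by deleting $v_1$ and $e_1$, with the remaining edges keeping their dimensions $\vec{\tilde e}=(e_2,\dots,e_m)$, and attach $\tilde V_1:=V_1\otimes V_2$ to the vertex $v_2$ and $V_j$ to $v_j$ for $j\ge3$. Then, under the natural identification $V_1\otimes\cdots\otimes V_n=\tilde V_1\otimes V_3\otimes\cdots\otimes V_n$, $$TNS(\Gamma,\vec e,V_1\otimes\cdots\otimes V_n)=TNS(\tilde\Gamma,\vec{\tilde e},\tilde V_1\otimes V_3\otimes\cdots\otimes V_n).$$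
   Context: Tensor network states: for a finite graph with vector spaces $W_j$ attached to vertices and complex vector spaces $E_s$ of dimension $e_s$ attached to edges (edges oriented arbitrarily), $TNS(\Gamma,\vec e,W_1\otimes\cdots\otimes W_k)$ is the set of tensors $T\in W_1\otimes\cdots\otimes W_k$ such that there are $T_j\in W_j\otimes(\bigotimes_{s\text{ entering }v_j}E_s)\otimes(\bigotimes_{t\text{ leaving }v_j}E_t^* )$ with $T=\mathrm{Con}(T_1\otimes\cdots\otimes T_k)$, where $\mathrm{Con}$ contracts every $E_s$ with $E_s^*$. *)

(* Defs.v *)
From HB Require Import structures.
From mathcomp Require Import all_boot all_algebra.
From mathcomp Require Import reals complex.

Set Implicit Arguments.
Unset Strict Implicit.
Unset Printing Implicit Defensive.
Import GRing.Theory.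
Local Open Scope ring_scope.

(* Basis indices of a tensor product of spaces of dimensions w j (j < k):
   a multi-index picks one basis index in each factor. *)
Definition multi_index (k : nat) (w : 'I_k -> nat) :=
  {dffun forall j : 'I_k, 'I_(w j)}.

Definition edge_label (m : nat) (e : 'I_m -> nat) :=
  {dffun forall s : 'I_m, 'I_(e s)}.

(* A tensor T (in coordinates) of W_1 ⊗ ... ⊗ W_k lies in TNS iff there are
   vertex tensors T_j in W_j ⊗ (⊗_{s incident to v_j} E_s or E_s^* ), i.e.
   functions of the W_j index and of the indices of the edges incident to v_j
   (encoded as functions of a global edge labelling depending only on the
   incident edges), such that T = Con(T_1 ⊗ ... ⊗ T_k): contracting every
   E_s with E_s^* is summing over a common index for edge s. *)
Definition TNS (K : fieldType) (k m : nat) (src tgt : 'I_m -> 'I_k)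
  (e : 'I_m -> nat) (w : 'I_k -> nat) (T : multi_index w -> K) : Prop :=
  exists Tv : forall j : 'I_k, 'I_(w j) -> edge_label e -> K,
    (forall (j : 'I_k) (a : 'I_(w j)) (f g : edge_label e),
        (forall s : 'I_m, (src s == j) || (tgt s == j) -> f s = g s) ->
        Tv j a f = Tv j a g) /\
    (forall a : multi_index w,
        T a = \sum_(f : edge_label e) \prod_(j : 'I_k) Tv j (a j) f).

(* vertex v_2 (0-based index 1) *)
Definition vtx1 {n : nat} : 'I_n.+2 := lift ord0 ord0.

(* The reduced graph: vertex j of the new graph is vertex (lift ord0 j) = j+1
   of the old one (so new vertex 0 is old v_2); new edge s is old edge s+1. *)
Definition tvert {n : nat} (u : 'I_n.+2) : 'I_n.+1 := inord (val u).-1.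
Definition tsrc {n m : nat} (src : 'I_m.+1 -> 'I_n.+2) (s : 'I_m) : 'I_n.+1 :=
  tvert (src (lift ord0 s)).
Definition te {m : nat} (e : 'I_m.+1 -> nat) (s : 'I_m) : nat := e (lift ord0 s).
Definition tw {n : nat} (v : 'I_n.+2 -> nat) (j : 'I_n.+1) : nat :=
  if j == ord0 then v ord0 * v vtx1 else v (lift ord0 j).

(* Natural identification V_1 ⊗ ... ⊗ V_n = (V_1 ⊗ V_2) ⊗ V_3 ⊗ ... ⊗ V_n on
   basis multi-indices: (a_1, a_2) <-> a_1 * dim V_2 + a_2, others unchanged. *)
Definition tcorr {n : nat} (v : 'I_n.+2 -> nat)
  (a : multi_index v) (b : multi_index (tw v)) : Prop :=
  val (b ord0) = (val (a ord0) * v vtx1 + val (a vtx1))%N /\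
  (forall j : 'I_n.+1, j != ord0 -> val (b j) = val (a (lift ord0 j))).

(* Main.v *)
Require Import Defs.
From HB Require Import structures.
From mathcomp Require Import all_boot all_algebra.
From mathcomp Require Import reals complex.
From mathcomp Require Import zify.
Set Implicit Arguments. Unset Strict Implicit.
Import GRing.Theory.
Local Open Scope ring_scope.

Lemma liftne0 k (i : 'I_k) : (lift ord0 i == ord0 :> 'I_k.+1) = false.
Proof. by apply/negbTE; rewrite eq_sym neq_lift. Qed.

Lemma tvert_val n (u : 'I_n.+2) : val (tvert u) = (val u).-1.
Proof. rewrite /tvert /= inordK //; have := ltn_ord u; lia. Qed.

Lemma tvert_lift n (j : 'I_n.+1) : tvert (lift ord0 j) = j.
Proof. by apply/val_inj; rewrite tvert_val. Qed.

Lemma tvert_eq n (u w : 'I_n.+2) : u != ord0 -> w != ord0 ->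
  (tvert u == tvert w) = (u == w).
Proof.
move=> /eqP u0 /eqP w0; apply/eqP/eqP => [h|->//].
apply/val_inj; have := congr1 val h; rewrite !tvert_val.
have : val u <> 0%N by move=> h'; apply: u0; apply/val_inj.
have : val w <> 0%N by move=> h'; apply: w0; apply/val_inj.
case: (val u) => [//|x]; case: (val w) => [//|y] /= _ _ ->//.
Qed.

Lemma tvert0 n : tvert (ord0 : 'I_n.+2) = ord0.
Proof. by apply/val_inj; rewrite tvert_val. Qed.
Lemma tvert_vtx1 n : tvert (vtx1 : 'I_n.+2) = ord0.
Proof. by apply/val_inj; rewrite tvert_val. Qed.

Lemma lift_tvert n (u : 'I_n.+2) : u != ord0 -> lift ord0 (tvert u) = u.
Proof.
move=> /eqP u0; apply/val_inj; rewrite /= tvert_val.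
have : val u <> 0%N by move=> h'; apply: u0; apply/val_inj.
move=> h; have hu : (0 < val u)%N by rewrite lt0n; apply/eqP. by rewrite /bump add1n prednK.
Qed.

Lemma vtx1_ne0 n : (vtx1 : 'I_n.+2) != ord0.
Proof. by rewrite /vtx1 liftne0. Qed.

Lemma ord_lt_eq k (w : 'I_k -> nat) j (c : 'I_(w j)) N : w j = N -> (val c < N)%N.
Proof. move=> h; rewrite -h; exact: ltn_ord. Qed.

Lemma tw_ne0 n (v : 'I_n.+2 -> nat) (j : 'I_n.+1) : j != ord0 -> tw v j = v (lift ord0 j).
Proof. by move=> /negbTE h; rewrite /tw h. Qed.

Lemma exists_a n (v : 'I_n.+2 -> nat) (b : multi_index (tw v)) :
  exists a : multi_index v, tcorr a b.
Proof.
have hb0 : (val (b ord0) < v ord0 * v vtx1)%N := ltn_ord (b ord0).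
have hv1 : (0 < v vtx1)%N by move: hb0; case: (v vtx1) => //; rewrite muln0.
pose xa (j : 'I_n.+2) : nat := if j == ord0 then (val (b ord0) %/ v vtx1)%N
  else if j == vtx1 then (val (b ord0) %% v vtx1)%N else val (b (tvert j)).
have H : forall j, (xa j < v j)%N.
  move=> j; rewrite /xa; case: eqP => [->|/eqP j0]; first by rewrite ltn_divLR.
  case: eqP => [->|/eqP j1]; first by rewrite ltn_mod.
  have tj : tvert j != ord0 by rewrite -(tvert_vtx1 n) tvert_eq // vtx1_ne0.
  apply: ord_lt_eq; by rewrite tw_ne0 // lift_tvert.
exists (finfun (fun j => Ordinal (H j)) : multi_index v); split.
  by rewrite !ffunE /= /xa eqxx (negbTE (vtx1_ne0 n)) eqxx -divn_eq.
move=> j j0; rewrite ffunE /= /xa liftne0.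
have -> : (lift ord0 j == vtx1) = false by rewrite /vtx1 (inj_eq (@lift_inj _ _)) (negbTE j0).
by rewrite tvert_lift.
Qed.

Lemma exists_b n (v : 'I_n.+2 -> nat) (a : multi_index v) :
  exists b : multi_index (tw v), tcorr a b.
Proof.
pose xb (j : 'I_n.+1) : nat := if j == ord0 then (val (a ord0) * v vtx1 + val (a vtx1))%N
  else val (a (lift ord0 j)).
have H : forall j, (xb j < tw v j)%N.
  move=> j; rewrite /xb; case: eqP => [->|/eqP j0] /=; last first.
    by rewrite tw_ne0 //; exact: ltn_ord.
  rewrite /tw eqxx. have h0 := ltn_ord (a ord0); have h1 := ltn_ord (a vtx1). nia.
exists (finfun (fun j => Ordinal (H j)) : multi_index (tw v)); split.
  by rewrite !ffunE /= /xb eqxx.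
by move=> j j0; rewrite ffunE /= /xb (negbTE j0).
Qed.
Definition extv (m : nat) (e : 'I_m.+1 -> nat) (x : 'I_(e ord0)) (f : edge_label (te e)) (s : 'I_m.+1) : nat :=
 if unlift ord0 s is Some s' then val (f s') else val x.
Lemma extv_lt m (e : 'I_m.+1 -> nat) x f s : (@extv m e x f s < e s)%N.
Proof. rewrite /extv; case: unliftP => [s'|] -> /=; exact: ltn_ord. Qed.
Definition ext m (e : 'I_m.+1 -> nat) (x : 'I_(e ord0)) (f : edge_label (te e)) : edge_label e :=
  finfun (fun s => Ordinal (extv_lt x f s)).
Lemma ext0 m (e : 'I_m.+1 -> nat) x f : val (@ext m e x f ord0) = val x.
Proof. by rewrite /ext ffunE /= /extv unlift_none. Qed.
Lemma extS m (e : 'I_m.+1 -> nat) x f s : val (@ext m e x f (lift ord0 s)) = val (f s).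
Proof. by rewrite /ext ffunE /= /extv liftK. Qed.
Definition restr m (e : 'I_m.+1 -> nat) (f : edge_label e) : edge_label (te e) :=
  finfun (fun s => f (lift ord0 s)).
Lemma sum_ext (K : nmodType) m (e : 'I_m.+1 -> nat) (F : edge_label e -> K) :
  \sum_f F f = \sum_(x : 'I_(e ord0)) \sum_(f : edge_label (te e)) F (ext x f).
Proof.
rewrite pair_big /=.
rewrite (reindex (fun p : 'I_(e ord0) * edge_label (te e) => ext p.1 p.2)) //.
exists (fun f : edge_label e => (f ord0, restr f)).
- move=> [x f] _ /=; congr pair; first by apply/val_inj; rewrite ext0.
  by apply/ffunP => s; apply/val_inj; rewrite /restr ffunE extS.
- move=> f _ /=; apply/ffunP => s; apply/val_inj.
  rewrite /ext ffunE /= /extv; case: unliftP => [s'|] -> //=.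
  by rewrite /restr ffunE.
Qed.
Lemma N_val (K : Type) k (w : 'I_k -> nat) (j : 'I_k) (c : 'I_(w j)) (G : 'I_(w j) -> K) (d : K):
  (if (insub (val c) : option 'I_(w j)) is Some c' then G c' else d) = G c.
Proof. by rewrite valK. Qed.

Lemma restr_ext m (e : 'I_m.+1 -> nat) x f : restr (@ext m e x f) = f.
Proof. by apply/ffunP => s; apply/val_inj; rewrite /restr ffunE extS. Qed.

Definition Nf (K : nmodType) k (w : 'I_k -> nat) (L : Type)
  (Tv : forall j : 'I_k, 'I_(w j) -> L -> K) (j : 'I_k) (x : nat) (f : L) : K :=
  if (insub x : option 'I_(w j)) is Some c then Tv j c f else 0.

Lemma Nf_val (K : nmodType) k (w : 'I_k -> nat) (L : Type)
  (Tv : forall j : 'I_k, 'I_(w j) -> L -> K) j (c : 'I_(w j)) f :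
  Nf Tv j (val c) f = Tv j c f.
Proof. by rewrite /Nf valK. Qed.

Lemma Nf_loc (K : nmodType) k (w : 'I_k -> nat) (L : Type)
  (Tv : forall j : 'I_k, 'I_(w j) -> L -> K) j x f g :
  (forall c, Tv j c f = Tv j c g) -> Nf Tv j x f = Nf Tv j x g.
Proof. by rewrite /Nf; case: insub. Qed.

Lemma TNS_empty (K : fieldType) k m (src tgt : 'I_m -> 'I_k) e w T :
  (multi_index w -> False) -> @TNS K k m src tgt e w T.
Proof. move=> h; exists (fun _ _ _ => 0); split => // a; case: (h a). Qed.

Lemma edge0_inc n m (src tgt : 'I_m.+1 -> 'I_n.+2)
  (Hjoin : ((src ord0 == ord0) && (tgt ord0 == vtx1))
        || ((src ord0 == vtx1) && (tgt ord0 == ord0))) u :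
  ((src ord0 == u) || (tgt ord0 == u)) = (u == ord0) || (u == vtx1).
Proof.
by case/orP: Hjoin => /andP [/eqP-> /eqP->]; rewrite ?(eq_sym u) // orbC.
Qed.

Lemma inc_new n m (src tgt : 'I_m.+1 -> 'I_n.+2)
  (Hval : forall s : 'I_m.+1, s != ord0 -> (src s != ord0) && (tgt s != ord0))
  (s : 'I_m) (u : 'I_n.+2) : u != ord0 ->
  ((tsrc src s == tvert u) || (tsrc tgt s == tvert u)) =
  ((src (lift ord0 s) == u) || (tgt (lift ord0 s) == u)).
Proof.
move=> u0; have /andP [h1 h2] := Hval (lift ord0 s) (negbT (liftne0 s)).
by rewrite /tsrc !tvert_eq.
Qed.

Lemma dir_back (K : fieldType) (n m : nat)
  (src tgt : 'I_m.+1 -> 'I_n.+2) (e : 'I_m.+1 -> nat) (v : 'I_n.+2 -> nat)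
  (Hjoin : ((src ord0 == ord0) && (tgt ord0 == vtx1))
        || ((src ord0 == vtx1) && (tgt ord0 == ord0)))
  (Hval : forall s : 'I_m.+1, s != ord0 -> (src s != ord0) && (tgt s != ord0))
  (Hdim : (v ord0 <= e ord0)%N)
  (T : multi_index v -> K) (X : multi_index (tw v) -> K)
  (Hid : forall a b, tcorr a b -> T a = X b) :
  @TNS _ _ _ (tsrc src) (tsrc tgt) (te e) (tw v) X -> @TNS _ _ _ src tgt e v T.
Proof.
move=> [Tv' [Hloc' Hsum']].
pose N' := Nf Tv'.
exists (fun u (a : 'I_(v u)) (f : edge_label e) =>
  if u == ord0 then (if val (f ord0) == val a then 1 else 0)
  else if u == vtx1 then
    (if (val (f ord0) < v ord0)%N then N' ord0 (val (f ord0) * v vtx1 + val a)%N (restr f) else 0)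
  else N' (tvert u) (val a) (restr f)); split.
  move=> u a f g Hfg.
  have Hr : u != ord0 -> N' (tvert u) ^~ (restr f) =1 N' (tvert u) ^~ (restr g).
    move=> u0 x; apply: Nf_loc => c; apply: Hloc' => s hs.
    rewrite /restr !ffunE; apply: Hfg; by rewrite -inc_new.
  have H0 : u == ord0 \/ u == vtx1 -> f ord0 = g ord0.
    move=> hu; apply: Hfg; rewrite (edge0_inc Hjoin); by case: hu => ->; rewrite ?orbT.
  case: eqP => [u0|/eqP u0]; first by rewrite H0 //; left; apply/eqP.
  case: eqP => [u1|/eqP u1].
    rewrite H0; last by right; apply/eqP.
    have tu : tvert u = ord0 by rewrite u1 tvert_vtx1.
    by rewrite -tu Hr.
  by rewrite Hr.
move=> a; have [b Hab] := exists_b a.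
rewrite (Hid a b Hab) Hsum' sum_ext exchange_big /=.
apply: eq_bigr => f' _.
case: Hab => Hb0 Hbj.
have ha0 : (val (a ord0) < e ord0)%N by apply: leq_trans (ltn_ord _) Hdim.
symmetry; rewrite (bigD1 (Ordinal ha0)) //= [X in _ + X]big1 ?addr0; last first.
  move=> x /eqP hx; rewrite big_ord_recl /= ext0.
  case: eqP => [hx'|]; last by rewrite mul0r.
  by case: hx; apply/val_inj.
rewrite big_ord_recl big_ord_recl /= ext0 eqxx mul1r.
have -> : \val (Ordinal ha0) = val (a ord0) by [].
rewrite (ltn_ord (a ord0)) restr_ext [RHS]big_ord_recl.
congr (_ * _).
  by rewrite -Hb0 /N' Nf_val.
apply: eq_bigr => i _.
by rewrite tvert_lift ?restr_ext -Hbj ?liftne0 // /N' Nf_val.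
Qed.

Lemma dir_fwd (K : fieldType) (n m : nat)
  (src tgt : 'I_m.+1 -> 'I_n.+2) (e : 'I_m.+1 -> nat) (v : 'I_n.+2 -> nat)
  (Hjoin : ((src ord0 == ord0) && (tgt ord0 == vtx1))
        || ((src ord0 == vtx1) && (tgt ord0 == ord0)))
  (Hval : forall s : 'I_m.+1, s != ord0 -> (src s != ord0) && (tgt s != ord0))
  (He : (0 < e ord0)%N)
  (T : multi_index v -> K) (X : multi_index (tw v) -> K)
  (Hid : forall a b, tcorr a b -> T a = X b) :
  @TNS _ _ _ src tgt e v T -> @TNS _ _ _ (tsrc src) (tsrc tgt) (te e) (tw v) X.
Proof.
move=> [Tv [Hloc Hsum]].
pose N := Nf Tv.
pose x0 : 'I_(e ord0) := Ordinal He.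
have Hext : forall u x (f g : edge_label (te e)),
    (forall s, (tsrc src s == tvert u) || (tsrc tgt s == tvert u) -> f s = g s) ->
    forall c, Tv u c (ext x f) = Tv u c (ext x g).
  move=> u x f g Hfg c; apply: Hloc => s'.
  case: (unliftP ord0 s') => [s|] -> hs; apply/val_inj; rewrite ?ext0 ?extS //.
  have u0 : u != ord0.
    apply/negP => /eqP u0; move: hs; rewrite u0.
    by have /andP [/negbTE -> /negbTE ->] := Hval (lift ord0 s) (negbT (liftne0 s)).
  by rewrite Hfg // inc_new.
exists (fun (j : 'I_n.+1) (b : 'I_(tw v j)) (f : edge_label (te e)) =>
  if j == ord0 then
    \sum_(x : 'I_(e ord0)) N ord0 (val b %/ v vtx1)%N (ext x f) * N vtx1 (val b %% v vtx1)%N (ext x f)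
  else N (lift ord0 j) (val b) (ext x0 f)); split.
  move=> j b f g Hfg.
  case: eqP => [j0|/eqP j0].
    apply: eq_bigr => x _; congr (_ * _); apply: Nf_loc => c; apply: Hext => s hs; apply: Hfg.
      by move: hs; rewrite j0 tvert0.
    by move: hs; rewrite j0 tvert_vtx1.
  apply: Nf_loc => c; apply: Hext => s hs; apply: Hfg; by move: hs; rewrite tvert_lift.
move=> b; have [a Hab] := exists_a b.
rewrite -(Hid a b Hab) Hsum sum_ext exchange_big /=.
apply: eq_bigr => f' _.
case: Hab => Hb0 Hbj.
have hv1 : (0 < v vtx1)%N by apply: leq_ltn_trans (ltn_ord (a vtx1)).
have hq : ((val (a ord0) * v vtx1 + val (a vtx1)) %/ v vtx1 = val (a ord0))%N.
  by rewrite divnMDl // divn_small ?addn0 // ltn_ord.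
have hr : ((val (a ord0) * v vtx1 + val (a vtx1)) %% v vtx1 = val (a vtx1))%N.
  by rewrite modnMDl modn_small // ltn_ord.
rewrite [RHS]big_ord_recl /= Hb0 hq hr /N mulr_suml.
apply: eq_bigr => x _.
rewrite !Nf_val big_ord_recl big_ord_recl mulrA; congr (_ * _).
apply: eq_bigr => i _.
rewrite Hbj ?liftne0 // Nf_val.
apply: Hloc => s'; case: (unliftP ord0 s') => [s|] -> hs; apply/val_inj; rewrite ?extS //.
move: hs; rewrite (edge0_inc Hjoin) liftne0 /vtx1 (inj_eq (@lift_inj _ _)) liftne0.
done.
Qed.

Theorem proposition6p1 (R : realType) (n m : nat)
  (src tgt : 'I_m.+1 -> 'I_n.+2) (e : 'I_m.+1 -> nat) (v : 'I_n.+2 -> nat)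
  (Hjoin : ((src ord0 == ord0) && (tgt ord0 == vtx1))
        || ((src ord0 == vtx1) && (tgt ord0 == ord0)))
  (Hval : forall s : 'I_m.+1, s != ord0 -> (src s != ord0) && (tgt s != ord0))
  (Hdim : (v ord0 <= e ord0)%N)
  (T : multi_index v -> R[i]) (X : multi_index (tw v) -> R[i])
  (Hid : forall a b, tcorr a b -> T a = X b) :
  @TNS _ _ _ src tgt e v T <-> @TNS _ _ _ (tsrc src) (tsrc tgt) (te e) (tw v) X.
Proof.
case: (posnP (e ord0)) => He.
  have hv : v ord0 = 0%N by apply/eqP; rewrite -leqn0 -He.
  split => _; apply: TNS_empty.
    move=> b; have hb0 : (val (b ord0) < v ord0 * v vtx1)%N := ltn_ord (b ord0).
    by rewrite hv in hb0.
  by move=> a; have := ord_lt_eq (a ord0) hv.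
split; [exact: dir_fwd | exact: dir_back].
Qed.
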